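(* Let $(X,d_X)$ be a complete metric space and let $\{E_t\}_{t\in\mathbb{R}}$ be a locally uniformly compact family of nonempty compact subsets of $X$. Then there exists a nonempty compact set $E\subset X$ with $\lim_{t\to\infty}\operatorname{dist}(E_t,E)=0$ if and only if $\{E_t\}_{t\in\mathbb{R}}$ is forward compact, i.e. there is a compact set $K\subset X$ with $\bigcup_{t\geq0}E_t\subset K$.
   Context: A family $\{E_t\}_{t\in\mathbb{R}}$ of nonempty compact sets is locally uniformly compact if for every bounded interval $I\subset\mathbb{R}$ the union $\bigcup_{t\in I}E_t$ is precompact. $\operatorname{dist}(A,B)=\sup_{a\in A}\inf_{b\in B}d_X(a,b)$ is the Hausdorff semi-metric. *)

(* Defs.v *)
From HB Require Import structures.
From mathcomp Require Import all_boot all_order all_algebra.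
From mathcomp Require Import all_classical all_reals all_analysis.
Set Implicit Arguments. Unset Strict Implicit. Unset Printing Implicit Defensive.
Import Order.TTheory GRing.Theory Num.Theory.
Local Open Scope classical_set_scope.
Local Open Scope ring_scope.

Definition complete_space {R : realType} (X : metricType R) : Prop :=
  forall F : set_system X, ProperFilter F -> cauchy F -> exists x : X, F --> x.

Definition hsemidist {R : realType} {X : metricType R} (A B : set X) : R :=
  sup [set inf [set mdist a b | b in B] | a in A].

(* Locally uniformly compact family: for every bounded interval I,
   the union of E t over t in I is precompact (it suffices to consider
   closed bounded intervals [a,b], which contain every bounded interval). *)
Definition locally_uniformly_compact {R : realType} {X : metricType R}
    (E : R -> set X) : Prop :=
  forall a b : R, precompact (\bigcup_(t in `[a, b]) E t).

Definition forward_compact {R : realType} {X : metricType R}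
    (E : R -> set X) : Prop :=
  exists K : set X, compact K /\ \bigcup_(t in `[0, +oo[) E t `<=` K.

(* Main.v *)
Require Import Defs.
From HB Require Import structures.
From mathcomp Require Import all_boot all_order all_algebra.
From mathcomp Require Import all_classical all_reals all_analysis.
From mathcomp Require Import lra.
Import Order.TTheory GRing.Theory Num.Theory.
Import numFieldNormedType.Exports.
Local Open Scope classical_set_scope.
Local Open Scope ring_scope.
Set Implicit Arguments. Unset Strict Implicit.

Section Helpers.
Context {R : realType} {X : metricType R}.

Lemma cpt_tails (C : set X) (A : R -> set X) :
  compact C -> (forall s, A s `<=` C) ->
  (forall s s', s <= s' -> A s' `<=` A s) -> (forall s, A s !=set0) ->
  exists p, C p /\ forall s, closure (A s) p.
Proof.
move=> cC AC Amon An0.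
have FF : Filter (filter_from setT A).
  apply: filter_fromT_filter; first by exists 0.
  move=> i j; exists (Num.max i j) => x Ax; split.
    by apply: (Amon i (Num.max i j)) => //; rewrite le_max lexx.
  by apply: (Amon j (Num.max i j)) => //; rewrite le_max lexx orbT.
have PF : ProperFilter (filter_from setT A).
  by apply: filter_from_proper => i _; exact: An0.
have FC : filter_from setT A C by exists 0.
have [p [Cp clp]] := cC _ PF FC.
exists p; split => // s B nB; apply: clp => //; by exists s.
Qed.

Lemma closure_mdist (A : set X) p e : closure A p -> 0 < e ->
  exists a, A a /\ mdist p a < e.
Proof.
move=> cl e0; have [a [Aa pa]] := cl _ (nbhsx_ballx p e e0).
by exists a; split => //; move: pa; rewrite ballEmdist.
Qed.

Lemma hsemi_le (A B : set X) e : A !=set0 -> B !=set0 ->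
  (forall a, A a -> exists2 b, B b & mdist a b < e) ->
  0 <= hsemidist A B <= e.
Proof.
move=> [a0 Aa0] [b0 Bb0] H.
have inf0 : forall a, 0 <= inf [set mdist a b | b in B].
  move=> a; apply: lb_le_inf; first by exists (mdist a b0), b0.
  by move=> _ [b _ <-]; exact: mdist_ge0.
have infe : forall a, A a -> inf [set mdist a b | b in B] < e.
  move=> a Aa; have [b Bb ab] := H a Aa.
  apply: le_lt_trans ab; apply: ge_inf; last by exists b.
  by exists 0 => _ [b' _ <-]; exact: mdist_ge0.
have ub : ubound [set inf [set mdist a b | b in B] | a in A] e.
  by move=> _ [a Aa <-]; exact/ltW/infe.
apply/andP; split.
  apply: (le_trans (inf0 a0)); apply: (ub_le_sup); first by exists e.
  by exists a0.
by apply: ge_sup => //; exists (inf [set mdist a0 b | b in B]), a0.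
Qed.

Lemma hsemi_ub (A B : set X) : compact A -> B !=set0 ->
  has_ubound [set inf [set mdist a b | b in B] | a in A].
Proof.
move=> cA [b0 Bb0].
suff [M HM] : exists M, forall a, A a -> mdist a b0 <= M.
  exists M => _ [a Aa <-]; apply: le_trans (HM a Aa).
  apply: ge_inf; last by exists b0.
  by exists 0 => _ [b' _ <-]; exact: mdist_ge0.
apply: contrapT => /forallNP nM.
have An0 : forall s, [set a | A a /\ s <= mdist a b0] !=set0.
  move=> s; have /existsNP[a /not_implyP[Aa /negP]] := nM s.
  by rewrite -ltNge => /ltW sa; exists a.
have [p [Ap clp]] := cpt_tails cA (fun s a (h : A a /\ s <= mdist a b0) => h.1)
  (fun s s' ss' a h => conj h.1 (le_trans ss' h.2)) An0.
have [a [[Aa aa] pa]] := closure_mdist (clp (mdist p b0 + 1)) ltr01.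
have := metric_triangle a p b0; rewrite metric_sym in pa.
move=> h; lra.
Qed.

End Helpers.

Section Main.
Context {R : realType}.

Lemma itv_ge (s t : R) : s <= t -> `[s, +oo[%classic t.
Proof. by move=> st; rewrite /= in_itv /= st. Qed.

Lemma itv_ge' (s t : R) : `[s, +oo[%classic t -> s <= t.
Proof. by rewrite /= in_itv /= andbT. Qed.

End Main.

Theorem proposition3p2 (R : realType) (X : metricType R) (E : R -> set X) :
  complete_space X ->
  (forall t, compact (E t) /\ E t !=set0) ->
  locally_uniformly_compact E ->
  ((exists E0 : set X, [/\ compact E0, E0 !=set0 &
      hsemidist (E t) E0 @[t --> +oo] --> (0 : R)])
   <-> forward_compact E).
Proof.
move=> cplt HE luc; split.
- move=> [E0 [cE0 E0n0 hcv]].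
  have Ha : forall e, 0 < e -> exists T, forall t, T < t -> forall a, E t a ->
      exists2 b, E0 b & mdist a b < e.
    move=> e e0; have /cvgrPdist_lt/(_ e e0) [T [_ HT]] := hcv.
    exists T => t Tt a Eta; have := HT t Tt; rewrite sub0r normrN => hlt.
    have hle : inf [set mdist a b | b in E0] <= hsemidist (E t) E0.
      by apply: (ub_le_sup (hsemi_ub (HE t).1 E0n0)); exists a.
    have := le_lt_trans hle (le_lt_trans (ler_norm _) hlt).
    case: E0n0 => b0 E0b0.
    move=> /inf_lt [| y [b E0b <-] ab]; first by exists (mdist a b0), b0.
    by exists b.
  pose U := \bigcup_(t in `[0, +oo[) E t.
  exists (closure U); split; last exact: subset_closure.
  rewrite compact_ultra => G GU GcU.
  suff cG : cauchy G.
    have [x Gx] := cplt G _ cG.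
    exists x; split => //.
    exact: (@closed_cvg _ _ G _ id _ (@closed_closure _ U) GcU x Gx).
  apply: cauchy_exP => eps eps0.
  pose e := eps / 3; have e0 : 0 < e by rewrite divr_gt0.
  have [T HT] := Ha e e0.
  pose C := closure (\bigcup_(t in `[0, T]) E t) `|` E0.
  have cC : compact C.
    by apply: compactU => //; rewrite -precompactE; exact: luc.
  have N : forall y, closure U y -> exists c, C c /\ mdist y c < e + e.
    move=> y cly; have [z [[t t0 Etz] yz]] := closure_mdist cly e0.
    case: (leP t T) => tT.
      exists z; split; last by lra.
      left; apply: subset_closure; exists t => //.
      by move: t0; rewrite /= !in_itv /= andbT => ->.
    have [b E0b zb] := HT t tT z Etz.
    exists b; split; first by right.
    by have := metric_triangle y z b; lra.
  have [c Hc] : exists c : X -> X, forall y, closure U y ->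
      C (c y) /\ mdist y (c y) < e + e.
    have Hex : forall y, exists c, closure U y -> C c /\ mdist y c < e + e.
      move=> y; have [/N [c Hc]|ncl] := pselect (closure U y).
        by exists c.
      by exists y => /ncl.
    have [f Hf] := choice Hex.
    by exists f.
  have cGC : (fmap c G) C.
    apply: (@filterS _ G _ (closure U)); last exact: GcU.
    move=> y cly.
    by have [h _] := Hc y cly.
  have [p [Cp clp]] := cC (fmap c G) _ cGC.
  exists p.
  have [Gb|Gnb] := in_ultra_setVsetC (c @^-1` ball p e) GU.
    apply: filterS (filterI Gb GcU) => y [bpy /Hc [_ ycy]].
    move: bpy; rewrite !ballEmdist /= => pcy.
    have := metric_triangle p (c y) y; rewrite (metric_sym (c y) y).
    rewrite /e in pcy ycy *; lra.
  have [z [nz bz]] := clp (~` ball p e) (ball p e) Gnb (nbhsx_ballx p e e0).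
  by exfalso; apply: nz.
- move=> [K [cK UK]].
  have clK : closed K := compact_closed (@metric_hausdorff _ X) cK.
  pose tail s := \bigcup_(t in `[s, +oo[) E t.
  pose E0 := [set p | forall s, closure (tail s) p].
  have tailK : forall s, 0 <= s -> tail s `<=` K.
    move=> s s0 x [t ts Etx]; apply: UK; exists t => //.
    by apply: itv_ge; apply: le_trans s0 (itv_ge' ts).
  have tailS : forall s s', s <= s' -> tail s' `<=` tail s.
    move=> s s' ss' x [t ts Etx]; exists t => //.
    by apply: itv_ge; apply: le_trans ss' (itv_ge' ts).
  have key : forall W, (forall s, (tail (Num.max s 0) `&` W) !=set0) ->
      exists p, E0 p /\ closure W p.
    move=> W HW.
    have [|s s' ss'|p [Kp clp]] := @cpt_tails R X K (fun s => tail (Num.max s 0) `&` W) cK _ _ HW.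
    + by move=> s x [tx _]; apply: (tailK (Num.max s 0)) => //; rewrite le_max lexx orbT.
    + move=> x [tx Wx]; split => //; apply: tailS tx.
      by rewrite ge_max !le_max ss' lexx orbT andbT.
    exists p; split.
      move=> s; apply: (closureS _ (clp s)) => x [tx _]; apply: tailS tx.
      by rewrite le_max lexx.
    by apply: (closureS _ (clp 0)) => x [].
  have E0cl : closed E0.
    move=> p clE0 s; apply: (@closed_closure _ (tail s) p).
    by apply: (closureS _ clE0) => q; apply.
  have E0K : E0 `<=` K.
    by move=> p hp; apply: clK; apply: (closureS (tailK 0 (lexx 0))); apply: hp.
  have E0n0 : E0 !=set0.
    have [|p [E0p _]] := key setT; last by exists p.
    move=> s; have [x Ex] := (HE (Num.max s 0)).2.
    by exists x; split => //; exists (Num.max s 0) => //; apply: itv_ge.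
  exists E0; split => //; first exact: subclosed_compact E0cl cK E0K.
  apply/cvgrPdist_le => eps eps0.
  suff [s Hs] : exists s, forall t, s <= t -> forall a, E t a ->
      exists2 b, E0 b & mdist a b < eps.
    exists s; split; first exact: num_real.
    move=> t st; have /andP[h0 h1] := hsemi_le (HE t).2 E0n0 (Hs t (ltW st)).
    by rewrite sub0r normrN ger0_norm.
  apply: contrapT => /forallNP Hn.
  pose W := [set a | forall b, E0 b -> eps <= mdist a b].
  have [p [E0p clWp]] : exists p, E0 p /\ closure W p.
    apply: key => s.
    have /existsNP[t /not_implyP[st /existsNP[a /not_implyP[Eta Hb]]]] :=
      Hn (Num.max s 0).
    exists a; split; first by exists t => //; apply: itv_ge.
    move=> b E0b; rewrite leNgt; apply/negP => ab; apply: Hb; by exists b.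
  have [a [Wa pa]] := closure_mdist clWp eps0.
  have := Wa p E0p; rewrite metric_sym; lra.
Qed.
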